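(* Let $\mathbb{Q}\subset K$ be a totally imaginary Galois extension of finite degree. Then $\overline{N}_{K/\mathbb{Q}}=\mathbb{Q}^+$.
   Context: $\overline{N}_{K/\mathbb{Q}}$ is the set of all finite sums $\sum_iN_{K/\mathbb{Q}}(a_i)$ with $a_i\in K$ and $N_{K/\mathbb{Q}}$ the field norm; $\mathbb{Q}^+$ denotes the non-negative rationals. A number field is totally imaginary if none of its embeddings into $\mathbb{C}$ lands in $\mathbb{R}$. *)

(* Defs.v *)
From HB Require Import structures.
From mathcomp Require Import all_boot all_order all_algebra all_field.
Set Implicit Arguments. Unset Strict Implicit. Unset Printing Implicit Defensive.
Import GRing.Theory Num.Theory.
Local Open Scope ring_scope.

(* Every embedding of a number field into C
   lands in the algebraic numbers algC, so we quantify over ring morphisms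
   K -> algC. *)
Definition totally_imaginary (K : fieldExtType rat) : Prop :=
  forall f : {rmorphism K -> algC}, exists x : K, f x \isn't Num.real.

Definition sums_of_norms (K : splittingFieldType rat) : K -> Prop :=
  fun x => exists s : seq K, x = \sum_(a <- s) galNorm 1%VS fullv a.

(* Main.v *)
Require Import Defs.
From HB Require Import structures.
From mathcomp Require Import all_boot all_order all_algebra all_field.
From mathcomp Require Import all_fingroup zify ring.
Import GRing.Theory Num.Theory.
Local Open Scope ring_scope.

Lemma mem1_rat (K : fieldExtType rat) (x : K) : x \in 1%VS -> exists k : rat, x = ratr k.
Proof. by move/vlineP=> [k ->]; exists k; rewrite -alg_num_field. Qed.

Lemma conj_embed (K : splittingFieldType rat)
  (Hgal : galois 1%VS (fullv : {vspace K})) (f : {rmorphism K -> algC}) (x : K) :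
  exists y : K, f y == (f x)^*.
Proof.
case/and3P: Hgal => _ _ /normalFieldP nK.
have [r _ Hr] := nK x (memvf x).
set p := minPoly 1 x in Hr.
have pO : p \is a polyOver 1%VS by apply: minPolyOver.
have Hc : map_poly Num.conj (map_poly f p) = map_poly f p.
  apply/polyP=> i; rewrite !coef_map /=.
  have [k ->] := mem1_rat _ _ (polyOverP pO i).
  by rewrite fmorph_rat fmorph_rat.
have Hroot : (map_poly f p).[(f x)^*] = 0.
  rewrite -Hc (horner_map Num.conj) horner_map /p minPolyxx rmorph0.
  by rewrite rmorph0.
have : root (map_poly f p) (f x)^* by apply/rootP.
rewrite Hr rmorph_prod (eq_bigr (fun b => 'X - (f b)%:P)); last first.
  by move=> b _; apply: map_polyXsubC.
rewrite -(big_map f predT (fun c => 'X - c%:P)) root_prod_XsubC.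
by case/mapP=> y _ ->; exists y.
Qed.

Lemma cjD (z w : algC) : (z + w)^* = z^* + w^*. Proof. exact: rmorphD. Qed.
Lemma cjM (z w : algC) : (z * w)^* = z^* * w^*. Proof. exact: rmorphM. Qed.
Lemma cjQ (a : rat) : (ratr a : algC)^* = ratr a. Proof. exact: fmorph_rat. Qed.

Definition tau (K : splittingFieldType rat)
  (Hgal : galois 1%VS (fullv : {vspace K})) (f : {rmorphism K -> algC}) : K -> K :=
  fun x => xchoose (conj_embed K Hgal f x).

Lemma tauE (K : splittingFieldType rat) (Hgal : galois 1%VS (fullv : {vspace K})) (f : {rmorphism K -> algC}) (x : K) : f (tau K Hgal f x) = (f x)^*.
Proof. exact: (eqP (xchooseP (conj_embed K Hgal f x))). Qed.

Lemma tau_lin (K : splittingFieldType rat) (Hgal : galois 1%VS (fullv : {vspace K})) (f : {rmorphism K -> algC}) : linear_for *:%R (tau K Hgal f).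
Proof.
move=> a u v; apply: (fmorph_inj f).
have E1 := rmorphD f (a *: u) v; have E2 := rmorphD f (a *: tau K Hgal f u) (tau K Hgal f v).
by rewrite tauE E1 E2 !rmorphZ_num !tauE cjD cjM cjQ.
Qed.

HB.instance Definition _ (K : splittingFieldType rat) (Hgal : galois 1%VS (fullv : {vspace K})) (f : {rmorphism K -> algC}) :=
  GRing.isLinear.Build rat K K *:%R (tau K Hgal f) (tau_lin K Hgal f).

Lemma tau_mul (K : splittingFieldType rat) (Hgal : galois 1%VS (fullv : {vspace K})) (f : {rmorphism K -> algC}) (x y : K) : tau K Hgal f (x * y) = tau K Hgal f x * tau K Hgal f y.
Proof. apply: (fmorph_inj f). by rewrite (rmorphM f) !tauE (rmorphM f) cjM. Qed.

Lemma tau1 (K : splittingFieldType rat) (Hgal : galois 1%VS (fullv : {vspace K})) (f : {rmorphism K -> algC}) : tau K Hgal f 1 = 1.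
Proof. by apply: (fmorph_inj f); rewrite tauE !rmorph1. Qed.

Lemma tau_gal (K : splittingFieldType rat) (Hgal : galois 1%VS (fullv : {vspace K})) (f : {rmorphism K -> algC}) : {t : gal_of (fullv : {vspace K}) |
   t \in 'Gal(fullv / 1%VS)%g & forall x, tau K Hgal f x = t x}.
Proof.
have H : kAut 1%AS fullv (linfun (tau K Hgal f)).
  rewrite kAutE subvf andbT k1HomE; apply/ahom_inP; split.
    by move=> x y _ _; rewrite !lfunE /= tau_mul.
  by rewrite lfunE /= tau1.
have [t Ht Heq] := kAut_to_gal H.
exists t => // x; rewrite -Heq ?memvf // lfunE //.
Qed.

Lemma prod_pair_ge0 (T : finType) (A : {set T}) (i : T -> T) (F : T -> algC) :
  (forall x, x \in A -> i x \in A) -> (forall x, i (i x) = x) -> (forall x, i x != x) ->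
  (forall x, F (i x) = (F x)^*) -> 0 <= \prod_(x in A) F x.
Proof.
move=> + ii ne hF.
move: {2}#|A| (leqnn #|A|) => n; elim: n A => [|n IH] A hn hA.
  by move: hn; rewrite leqn0 => /eqP/cards0_eq ->; rewrite big_set0.
case: (set_0Vmem A) => [->|[x xA]]; first by rewrite big_set0.
rewrite (bigD1 x) //= (bigD1 (i x)) /=; last by rewrite hA // ne.
rewrite mulrA hF; apply: mulr_ge0; first exact: mul_conjC_ge0.
set A' := A :\ x :\ i x.
rewrite (eq_bigl (fun y => y \in A')); last first.
  by move=> y; rewrite !inE; case: (y \in A); case: (y == x); case: (y == i x).
apply: IH.
  have h1 := cardsD1 x A; rewrite xA in h1.
  have h2 : (#|A'| <= #|A :\ x|)%N by apply: subset_leq_card; apply: subD1set.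
  lia.
move=> y; rewrite !inE => /and3P[h1 h2 h3]; rewrite hA // andbT.
apply/andP; split.
  by apply: contra h2 => /eqP h; rewrite -(ii y) h ii.
by apply: contra h1 => /eqP <-; rewrite ii.
Qed.

Definition phiE (K : fieldExtType rat) (z : K) (w : algC)
  (hrep : forall x : K, exists q : {poly rat}, x == (map_poly (in_alg K) q).[z]) (x : K) : algC :=
  (map_poly (ratr : rat -> algC) (xchoose (hrep x))).[w].

Lemma phiE_eq (K : fieldExtType rat) (z : K) (w : algC)
  (hrep : forall x : K, exists q : {poly rat}, x == (map_poly (in_alg K) q).[z])
  (hkey : forall q : {poly rat}, (map_poly (in_alg K) q).[z] = 0 -> (map_poly (ratr : rat -> algC) q).[w] = 0)
  (q : {poly rat}) : phiE K z w hrep ((map_poly (in_alg K) q).[z]) = (map_poly (ratr : rat -> algC) q).[w].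
Proof.
rewrite /phiE; set x := (map_poly (in_alg K) q).[z].
have /eqP hx := xchooseP (hrep x).
apply/eqP; rewrite -subr_eq0 -hornerN -hornerD -rmorphN -rmorphD; apply/eqP.
apply: hkey; rewrite rmorphD rmorphN hornerD hornerN -hx subrr //.
Qed.

Lemma phiE_rep (K : fieldExtType rat) (z : K) (w : algC)
  (hrep : forall x : K, exists q : {poly rat}, x == (map_poly (in_alg K) q).[z]) (x : K) :
  x = (map_poly (in_alg K) (xchoose (hrep x))).[z].
Proof. exact: (eqP (xchooseP (hrep x))). Qed.

Lemma phiE_add (K : fieldExtType rat) (z : K) (w : algC)
  (hrep : forall x : K, exists q : {poly rat}, x == (map_poly (in_alg K) q).[z])
  (hkey : forall q : {poly rat}, (map_poly (in_alg K) q).[z] = 0 -> (map_poly (ratr : rat -> algC) q).[w] = 0) :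
  zmod_morphism (phiE K z w hrep).
Proof.
move=> x y.
rewrite {1}(phiE_rep K z w hrep x) {1}(phiE_rep K z w hrep y) -hornerN -hornerD -rmorphN -rmorphD.
by rewrite phiE_eq // rmorphD rmorphN hornerD hornerN.
Qed.

Lemma phiE_mul (K : fieldExtType rat) (z : K) (w : algC)
  (hrep : forall x : K, exists q : {poly rat}, x == (map_poly (in_alg K) q).[z])
  (hkey : forall q : {poly rat}, (map_poly (in_alg K) q).[z] = 0 -> (map_poly (ratr : rat -> algC) q).[w] = 0) :
  monoid_morphism (phiE K z w hrep).
Proof.
split.
  have -> : (1 : K) = (map_poly (in_alg K) 1).[z] by rewrite rmorph1 hornerC.
  by rewrite phiE_eq // rmorph1 hornerC.
move=> x y.
rewrite {1}(phiE_rep K z w hrep x) {1}(phiE_rep K z w hrep y) -hornerM -rmorphM.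
by rewrite phiE_eq // rmorphM hornerM.
Qed.

Lemma embed_exists (K : fieldExtType rat) (z : K) (w : algC)
  (hrep : forall x : K, exists q : {poly rat}, x == (map_poly (in_alg K) q).[z])
  (hkey : forall q : {poly rat}, (map_poly (in_alg K) q).[z] = 0 -> (map_poly (ratr : rat -> algC) q).[w] = 0) :
  exists f : {rmorphism K -> algC}, True.
Proof.
pose m1 := GRing.isZmodMorphism.Build K algC (phiE K z w hrep) (phiE_add K z w hrep hkey).
pose m2 := GRing.isMonoidMorphism.Build K algC (phiE K z w hrep) (phiE_mul K z w hrep hkey).
pose F : {rmorphism K -> algC} := HB.pack (phiE K z w hrep) m1 m2.
by exists F.
Qed.

Lemma embedding (K : splittingFieldType rat)
  (Hgal : galois 1%VS (fullv : {vspace K})) : exists f : {rmorphism K -> algC}, True.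
Proof.
case/and3P: Hgal => _ Hsep _.
have Hz := eq_adjoin_separable_generator Hsep (sub1v _).
set z := separable_generator _ _ in Hz.
set mp := minPoly 1 z.
have /polyOver1P [pQ HpQ] : mp \is a polyOver 1%VS by apply: minPolyOver.
have Hs : size (map_poly (ratr : rat -> algC) pQ) != 1%N.
  rewrite size_map_poly -(size_map_poly (in_alg K)) -HpQ.
  apply/negP=> /eqP h.
  have := root_minPoly 1 z; rewrite -/mp (size1_polyC (eq_leq h)) rootC.
  have : lead_coef mp = 1 by apply/monicP/monic_minPoly.
  by rewrite lead_coefE h => ->; rewrite oner_eq0.
have [w Hw] := closed_rootP _ Hs.
apply: (embed_exists K z w).
  move=> x; have : x \in <<1; z>>%VS by rewrite -Hz memvf.
  by case/Fadjoin1_polyP=> q ->; exists q.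
move=> q Hq.
have : mp %| map_poly (in_alg K) q.
  by apply: minPoly_dvdp; [apply: alg_polyOver | apply/rootP].
rewrite HpQ dvdp_map => /dvdpP [h ->].
by rewrite rmorphM hornerM (rootP Hw) mulr0.
Qed.

Lemma norm_ok (K : splittingFieldType rat)
  (Hgal : galois 1%VS (fullv : {vspace K}))
  (Himag : totally_imaginary K) (a : K) :
  exists r : rat, 0 <= r /\ galNorm 1%VS fullv a = r%:A.
Proof.
have [f _] := embedding K Hgal.
have [t Ht Htau] := tau_gal K Hgal f.
have [k Hk] := vlineP _ _ (mem_galNorm Hgal (memvf a)).
exists k; split => //.
have Hf : f (galNorm 1%VS fullv a) = ratr k.
  by rewrite Hk rmorphZ_num rmorph1 mulr1.
rewrite -(ler0q algC) -Hf /galNorm rmorph_prod.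
have Htt : (t * t)%g = 1%g.
  apply/eqP/gal_eqP => y _; rewrite galM ?memvf // gal_id -!Htau.
  by apply: (fmorph_inj f); rewrite !tauE conjCK.
apply: (prod_pair_ge0 _ _ (fun s => s * t)%g).
- by move=> s Hs; rewrite groupM.
- by move=> s; rewrite -mulgA Htt mulg1.
- move=> s; apply/eqP => h.
  have t1 : t = 1%g by rewrite -(mulKg s t) h mulVg.
  have [y Hy] := Himag f.
  move: Hy; rewrite CrealE -tauE Htau t1 gal_id eqxx.
  by [].
- by move=> s /=; rewrite galM ?memvf // -Htau tauE.
Qed.

Theorem mainTheorem9 (K : splittingFieldType rat)
  (Hgal : galois 1%VS (fullv : {vspace K}))
  (Himag : totally_imaginary K) :
  forall x : K, sums_of_norms x <-> exists r : rat, 0 <= r /\ x = r%:A.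
Proof.
move=> x; split.
  case=> s ->; elim: s => [|a s [r [r0 Hr]]].
    by exists 0; rewrite big_nil scale0r.
  have [r' [r0' Hr']] := norm_ok K Hgal Himag a.
  exists (r' + r); split; first exact: addr_ge0.
  by rewrite big_cons Hr Hr' scalerDl.
case=> r [r0 ->].
pose n := #|'Gal((fullv : {vspace K}) / 1%VS)%g|.
have Hnorm c : galNorm 1%VS fullv (c%:A : K) = (c ^+ n)%:A.
  rewrite /galNorm (eq_bigr (fun _ => c%:A)); last first.
    by move=> s Hs; rewrite (fixed_gal (subvf _) Hs) // rpredZ // mem1v.
  by rewrite prodr_const exprZn expr1n.
have : (0 < n)%N by apply: cardG_gt0.
case: n Hnorm => // n' Hnorm _.
have [pn Hpn] : exists pn : nat, numq r = pn%:Z.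
  by exists `|numq r|%N; rewrite gez0_abs // numq_ge0.
have [dn Hdn] : exists dn : nat, denq r = dn%:Z.
  by exists `|denq r|%N; rewrite gez0_abs // ltW // denq_gt0.
have dn0 : dn%:R != 0 :> rat.
  by rewrite pnatr_eq0 -lt0n -ltz_nat -Hdn denq_gt0.
exists (nseq (pn * dn ^ n') ((dn%:R : rat)^-1)%:A).
have Hit m (v : K) : iter m (+%R v) 0 = v *+ m.
  by elim: m => //= m IH; rewrite IH mulrS.
rewrite big_nseq Hit Hnorm -scaler_nat scalerA.
congr (_ *: _).
rewrite -{1}(divq_num_den r) Hpn Hdn natrM natrX exprVn exprS.
rewrite -!pmulrn.
field.
by rewrite dn0 expf_neq0.
Qed.
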